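(* Let $r,s$ be coprime integers, let $k,n\in\mathbb{Z}$ satisfy $-rk+sn=1$, and put $p:=rk$ (so $p+1=sn$). Let $\pi=\langle u,v\mid u^r=v^s\rangle$ with $m=u^nv^{-k}$, $l=v^sm^{-rs}$, and let $\tilde\pi=\langle \tilde u,\tilde v\mid \tilde u^{p}=\tilde v^{p+1}\rangle$ with $\tilde m=\tilde u\tilde v^{-1}$, $\tilde l=\tilde v^{p+1}\tilde m^{-p(p+1)}$. Then $\tilde u\mapsto u^n$, $\tilde v\mapsto v^k$ defines a surjective group homomorphism $\tilde\pi\to\pi$ sending $\tilde m\mapsto m$ and $\tilde l\mapsto l^{kn}$. *)

(* Defs.v *)
From Stdlib Require Import ZArith.
Open Scope Z_scope.

Record Grp := {
  carrier :> Type;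
  gmul : carrier -> carrier -> carrier;
  ginv : carrier -> carrier;
  gone : carrier;
  gmulA : forall x y z, gmul x (gmul y z) = gmul (gmul x y) z;
  gmul1l : forall x, gmul gone x = x;
  gmul1r : forall x, gmul x gone = x;
  gmulVl : forall x, gmul (ginv x) x = gone;
  gmulVr : forall x, gmul x (ginv x) = gone
}.

Arguments gmul {g} _ _.
Arguments ginv {g} _.
Arguments gone {g}.

Fixpoint gpow_nat {G : Grp} (x : G) (n : nat) : G :=
  match n with
  | O => gone
  | S n' => gmul x (gpow_nat x n')
  end.

Definition zpow {G : Grp} (x : G) (z : Z) : G :=
  match z with
  | Z0 => gone
  | Zpos q => gpow_nat x (Pos.to_nat q)
  | Zneg q => ginv (gpow_nat x (Pos.to_nat q))
  end.

Definition is_hom {G H : Grp} (f : G -> H) : Prop :=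
  forall x y, f (gmul x y) = gmul (f x) (f y).

(* (P, u, v) is the group < u, v | u^a = v^b >, i.e. it satisfies the
   relation and the universal property of this presentation. *)
Definition is_presentation2 (P : Grp) (u v : P) (a b : Z) : Prop :=
  zpow u a = zpow v b /\
  forall (H : Grp) (x y : H), zpow x a = zpow y b ->
    exists! f : P -> H, is_hom f /\ f u = x /\ f v = y.

(* Main.v *)
Require Import Defs.
From Stdlib Require Import ZArith Lia ProofIrrelevance.
Open Scope Z_scope.
Arguments gmulA {_}. Arguments gmul1l {_}. Arguments gmul1r {_}. Arguments gmulVl {_}. Arguments gmulVr {_}.

Lemma inv_unique {G : Grp} (x y : G) : gmul x y = gone -> ginv x = y.
Proof.
  intro H. rewrite <- (gmul1r (ginv x)). rewrite <- H.
  rewrite gmulA, gmulVl, gmul1l. reflexivity.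
Qed.

Lemma ginv_one {G : Grp} : ginv (@gone G) = gone.
Proof. apply inv_unique, gmul1l. Qed.

Lemma ginv_mul {G : Grp} (a b : G) : ginv (gmul a b) = gmul (ginv b) (ginv a).
Proof.
  apply inv_unique. rewrite gmulA, <- (gmulA a b), gmulVr, gmul1r, gmulVr.
  reflexivity.
Qed.

Lemma gpow_nat_succ_r {G : Grp} (x : G) n : gpow_nat x (S n) = gmul (gpow_nat x n) x.
Proof.
  induction n; simpl.
  - rewrite gmul1r, gmul1l. reflexivity.
  - simpl in IHn. rewrite IHn, gmulA, IHn. reflexivity.
Qed.

Lemma zpow_nat {G : Grp} (x : G) n : zpow x (Z.of_nat n) = gpow_nat x n.
Proof. destruct n; simpl; [reflexivity|]. rewrite SuccNat2Pos.id_succ. reflexivity. Qed.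

Lemma zpow_opp_nat {G : Grp} (x : G) n : zpow x (- Z.of_nat n) = ginv (gpow_nat x n).
Proof.
  destruct n; simpl.
  - symmetry; apply ginv_one.
  - rewrite SuccNat2Pos.id_succ. reflexivity.
Qed.

Lemma zpow_succ {G : Grp} (x : G) z : zpow x (Z.succ z) = gmul (zpow x z) x.
Proof.
  destruct (Z_le_gt_dec 0 z).
  - rewrite <- (Z2Nat.id z) by lia. rewrite <- Nat2Z.inj_succ, !zpow_nat.
    apply gpow_nat_succ_r.
  - assert (E : z = - Z.of_nat (S (Z.to_nat (- z - 1)))).
    { rewrite Nat2Z.inj_succ, Z2Nat.id by lia. lia. }
    assert (E2 : Z.succ z = - Z.of_nat (Z.to_nat (- z - 1))).
    { rewrite Z2Nat.id by lia. lia. }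
    set (N := Z.to_nat (- z - 1)) in E, E2. clearbody N.
    rewrite E2, E.
    rewrite !zpow_opp_nat. change (gpow_nat x (S N)) with (gmul x (gpow_nat x N)).
    rewrite ginv_mul, <- gmulA, gmulVl, gmul1r. reflexivity.
Qed.

Lemma zpow_pred {G : Grp} (x : G) z : zpow x (Z.pred z) = gmul (zpow x z) (ginv x).
Proof.
  rewrite <- (Z.succ_pred z) at 2. rewrite zpow_succ, <- gmulA, gmulVr, gmul1r.
  reflexivity.
Qed.

Lemma zpow_add {G : Grp} (x : G) a b : zpow x (a + b) = gmul (zpow x a) (zpow x b).
Proof.
  induction b using Z.peano_ind.
  - rewrite Z.add_0_r. simpl. rewrite gmul1r. reflexivity.
  - rewrite Z.add_succ_r, !zpow_succ, IHb, gmulA. reflexivity.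
  - rewrite Z.add_pred_r, !zpow_pred, IHb, gmulA. reflexivity.
Qed.

Lemma zpow_opp {G : Grp} (x : G) a : zpow x (- a) = ginv (zpow x a).
Proof.
  symmetry. apply inv_unique. rewrite <- zpow_add, Z.add_opp_diag_r. reflexivity.
Qed.

Lemma zpow_mul {G : Grp} (x : G) a b : zpow (zpow x a) b = zpow x (a * b).
Proof.
  induction b using Z.peano_ind.
  - rewrite Z.mul_0_r. reflexivity.
  - rewrite zpow_succ, IHb, <- zpow_add. f_equal. rewrite Z.mul_succ_r. ring.
  - rewrite zpow_pred, IHb, <- zpow_opp, <- zpow_add. f_equal.
    rewrite Z.mul_pred_r. ring.
Qed.

Lemma hom_one {G H : Grp} (h : G -> H) : is_hom h -> h gone = gone.
Proof.
  intro hh. assert (E : gmul (h gone) (h gone) = gmul (h gone) gone).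
  { rewrite <- hh, gmul1l, gmul1r. reflexivity. }
  rewrite <- (gmul1l (h gone)), <- (gmulVl (h gone)), <- gmulA, E, gmul1r, gmulVl.
  reflexivity.
Qed.

Lemma hom_inv {G H : Grp} (h : G -> H) x : is_hom h -> h (ginv x) = ginv (h x).
Proof.
  intro hh. symmetry. apply inv_unique. rewrite <- hh, gmulVr. apply hom_one, hh.
Qed.

Lemma hom_zpow {G H : Grp} (h : G -> H) x z : is_hom h -> h (zpow x z) = zpow (h x) z.
Proof.
  intro hh. induction z using Z.peano_ind.
  - apply hom_one, hh.
  - rewrite !zpow_succ, hh, IHz. reflexivity.
  - rewrite !zpow_pred, hh, IHz, hom_inv by exact hh. reflexivity.
Qed.

Definition gcomm {G : Grp} (a b : G) := gmul a b = gmul b a.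

Lemma comm_sym {G : Grp} (a b : G) : gcomm a b -> gcomm b a.
Proof. unfold gcomm; auto. Qed.

Lemma comm_mul {G : Grp} (a x y : G) : gcomm a x -> gcomm a y -> gcomm a (gmul x y).
Proof.
  unfold gcomm; intros h1 h2. rewrite gmulA, h1, <- gmulA, h2, gmulA. reflexivity.
Qed.

Lemma comm_inv {G : Grp} (a x : G) : gcomm a x -> gcomm a (ginv x).
Proof.
  unfold gcomm; intro h.
  transitivity (gmul (ginv x) (gmul (gmul x a) (ginv x))).
  - rewrite !gmulA, gmulVl, gmul1l. reflexivity.
  - rewrite <- h, <- (gmulA a x), gmulVr, gmul1r. reflexivity.
Qed.

Lemma comm_zpow {G : Grp} (a x : G) z : gcomm a x -> gcomm a (zpow x z).
Proof.
  intro h. induction z using Z.peano_ind.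
  - unfold gcomm; simpl. rewrite gmul1l, gmul1r. reflexivity.
  - rewrite zpow_succ. apply comm_mul; auto.
  - rewrite zpow_pred. apply comm_mul; auto. apply comm_inv; auto.
Qed.

Lemma zpow_mul_comm {G : Grp} (a b : G) z : gcomm a b ->
  zpow (gmul a b) z = gmul (zpow a z) (zpow b z).
Proof.
  intro h. induction z using Z.peano_ind.
  - simpl. rewrite gmul1l. reflexivity.
  - rewrite !zpow_succ, IHz.
    assert (C : gcomm (zpow b z) a) by (apply comm_sym, comm_zpow, h).
    unfold gcomm in C.
    rewrite !gmulA, <- (gmulA (zpow a z) (zpow b z) a), C, !gmulA. reflexivity.
  - rewrite !zpow_pred, IHz, ginv_mul.
    assert (C : gcomm (gmul (zpow b z) (ginv b)) (ginv a)).
    { apply comm_inv, comm_sym, comm_mul; [apply comm_zpow, h | apply comm_inv, h]. }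
    unfold gcomm in C.
    rewrite gmulA, <- (gmulA (zpow a z) (zpow b z) (ginv b)), <- gmulA, C, !gmulA.
    reflexivity.
Qed.

Lemma sig_ext {A : Type} {Q : A -> Prop} (a b : sig Q) : proj1_sig a = proj1_sig b -> a = b.
Proof.
  destruct a as [a pa], b as [b pb]; simpl; intros ->. f_equal. apply proof_irrelevance.
Qed.


Definition img_car {G H : Grp} (f : G -> H) := {y : H | exists x, f x = y}.

Lemma img_mul {G H : Grp} (f : G -> H) (hf : is_hom f) (a b : img_car f) :
  exists x, f x = gmul (proj1_sig a) (proj1_sig b).
Proof.
  destruct a as [a [x1 e1]], b as [b [x2 e2]]; simpl.
  exists (gmul x1 x2). rewrite hf, e1, e2. reflexivity.
Qed.

Lemma img_inv {G H : Grp} (f : G -> H) (hf : is_hom f) (a : img_car f) :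
  exists x, f x = ginv (proj1_sig a).
Proof.
  destruct a as [a [x1 e1]]; simpl. exists (ginv x1). rewrite hom_inv, e1; auto.
Qed.

Lemma img_one {G H : Grp} (f : G -> H) (hf : is_hom f) : exists x, f x = gone.
Proof. exists gone. apply hom_one, hf. Qed.

Definition img_grp {G H : Grp} (f : G -> H) (hf : is_hom f) : Grp.
Proof.
  refine {| carrier := img_car f;
            gmul := fun a b => exist _ (gmul (proj1_sig a) (proj1_sig b)) (img_mul f hf a b);
            ginv := fun a => exist _ (ginv (proj1_sig a)) (img_inv f hf a);
            gone := exist _ gone (img_one f hf) |}.
  - intros; apply sig_ext; simpl; apply gmulA.
  - intros; apply sig_ext; simpl; apply gmul1l.
  - intros; apply sig_ext; simpl; apply gmul1r.
  - intros; apply sig_ext; simpl; apply gmulVl.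
  - intros; apply sig_ext; simpl; apply gmulVr.
Defined.

Lemma img_proj_hom {G H : Grp} (f : G -> H) (hf : is_hom f) :
  @is_hom (img_grp f hf) H (fun a => proj1_sig a).
Proof. intros x y. reflexivity. Qed.

Theorem mainTheorem6 (r s k n : Z)
  (hcop : Z.gcd r s = 1) (hkn : - r * k + s * n = 1)
  (P : Grp) (u v : P) (hP : is_presentation2 P u v r s)
  (Pt : Grp) (ut vt : Pt) (hPt : is_presentation2 Pt ut vt (r * k) (r * k + 1)) :
  let p := r * k in
  let m := gmul (zpow u n) (zpow v (- k)) in
  let l := gmul (zpow v s) (zpow m (- (r * s))) in
  let mt := gmul ut (ginv vt) in
  let lt := gmul (zpow vt (p + 1)) (zpow mt (- (p * (p + 1)))) in
  exists f : Pt -> P,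
    is_hom f /\ f ut = zpow u n /\ f vt = zpow v k /\
    (forall y : P, exists x : Pt, f x = y) /\
    f mt = m /\ f lt = zpow l (k * n).
Proof.
  intros p m l mt lt.
  destruct hP as [hrel hUP]. destruct hPt as [_ hUPt].
  assert (hsn : r * k + 1 = s * n) by lia.
  assert (rel : zpow (zpow u n) (r * k) = zpow (zpow v k) (r * k + 1)).
  { rewrite !zpow_mul, hsn.
    replace (n * (r * k)) with (r * (n * k)) by ring.
    rewrite <- zpow_mul, hrel, zpow_mul. f_equal. ring. }
  destruct (hUPt P _ _ rel) as [f [[hf [fu fv]] _]].
  exists f.
  assert (fmt : f mt = m).
  { unfold mt, m. rewrite hf, hom_inv, fu, fv, zpow_opp by exact hf. reflexivity. }
  split; [exact hf|]. split; [exact fu|]. split; [exact fv|].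
  split; [| split; [exact fmt|]].
  -
    assert (pu : exists x, f x = u).
    { exists (gmul (zpow ut s) (zpow vt (- s))).
      rewrite hf, !hom_zpow, fu, fv by exact hf. rewrite !zpow_mul.
      replace (k * - s) with (s * - k) by ring.
      rewrite <- (zpow_mul v s (- k)) , <- hrel, zpow_mul, <- zpow_add.
      transitivity (zpow u 1); [f_equal; lia | simpl; apply gmul1r]. }
    assert (pv : exists x, f x = v).
    { exists (gmul (zpow ut r) (zpow vt (- r))).
      rewrite hf, !hom_zpow, fu, fv by exact hf. rewrite !zpow_mul.
      replace (n * r) with (r * n) by ring.
      replace (k * - r) with (k * - r) by ring.
      rewrite <- (zpow_mul u r n), hrel, zpow_mul, <- zpow_add.
      transitivity (zpow v 1); [f_equal; lia | simpl; apply gmul1r]. }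
    set (I := img_grp f hf).
    set (iu := exist _ u pu : I). set (iv := exist _ v pv : I).
    assert (irel : zpow iu r = zpow iv s).
    { apply sig_ext.
      change (proj1_sig (zpow iu r)) with ((fun a : I => proj1_sig a) (zpow iu r)).
      change (proj1_sig (zpow iv s)) with ((fun a : I => proj1_sig a) (zpow iv s)).
      rewrite !hom_zpow by apply img_proj_hom. exact hrel. }
    destruct (hUP I iu iv irel) as [g [[hg [gu gv]] _]].
    destruct (hUP P u v hrel) as [g0 [_ uniq]].
    assert (E1 : g0 = fun y => y).
    { apply uniq. split; [intros x y; reflexivity| split; reflexivity]. }
    assert (E2 : g0 = fun y => proj1_sig (g y)).
    { apply uniq. split; [|split].
      - intros x y. rewrite hg. reflexivity.
      - rewrite gu. reflexivity.
      - rewrite gv. reflexivity. }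
    intro y. assert (Ey : y = proj1_sig (g y)).
    { exact (f_equal (fun h => h y) (eq_trans (eq_sym E1) E2)). }
    destruct (proj2_sig (g y)) as [x hx]. exists x. rewrite hx. exact (eq_sym Ey).
  - unfold lt, l. rewrite hf, !hom_zpow, fv, fmt by exact hf.
    assert (C : gcomm (zpow v s) (zpow m (- (r * s)))).
    { apply comm_zpow. unfold m. apply comm_mul; apply comm_zpow.
      - rewrite <- hrel. apply comm_sym, comm_zpow. reflexivity.
      - apply comm_sym, comm_zpow. reflexivity. }
    rewrite zpow_mul_comm by exact C. rewrite !zpow_mul.
    unfold p. rewrite hsn. f_equal; f_equal; ring.
Qed.
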